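(* Let $\Gamma$ be a $3$-saturated drawing on at least three vertices, with vertex set $V$, edge multiset $E$ and set of crossings $X$. Then \[ |X| \;\le\; 5|V| + 2N(A_3) + N(A_4) + N(B_4) - \frac{1}{6}\sum_{a\ge 6} a\,|\mathcal{C}_a| - |E|. \]
   Context: Drawings are on the sphere: vertices are distinct points, edges (of a graph possibly with parallel edges, no loops) are Jordan arcs; any two edges share finitely many points, each a common endpoint or a proper crossing; no three edges cross at one point; no edge crosses itself; adjacent edges do not cross. A drawing is $3$-plane if every edge is crossed at most three times. A lens is a region bounded by exactly two parts of edges; a drawing is non-homotopic if every lens contains a crossing or vertex in its interior. An edge with $i$ crossings is split into $i+1$ edge-segments; an edge-segment is inner if both endpoints are crossings and outer otherwise. The planarization replaces each crossing by a degree-$4$ vertex; the drawing is connected if its planarization is connected. Cells are the components of the sphere minus all vertices and edges; the boundary $\partial c$ of a cell is a cyclic sequence alternating between edge-segments and vertices/crossings. The size $\|c\|$ of a cell is the number of vertex incidences plus the number of edge-segment incidences along $\partial c$ (crossings not counted); $\mathcal{C}_a$ is the set of cells of size $a$. A drawing is filled if for every cell $c$ and distinct vertices $u\neq v$ on $\partial c$ there is an uncrossed edge $uv$ on $\partial c$. A drawing is $3$-saturated if it is $3$-plane, non-homotopic, connected, filled, and has at least three vertices. Cell types: $A_3$: three crossings and three inner edge-segments, no vertex (size $3$). $A_4$: four crossings and four inner edge-segments (size $4$). $B_4$: boundary $v$, outer segment, crossing, inner segment, crossing, outer segment (size $4$). $N(T)$ is the number of cells of type $T$. *)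

(* Defs.v *)
(* A drawing on the sphere is encoded combinatorially by its
   planarization, embedded as a rotation system (combinatorial map) on the sphere. *)
From mathcomp Require Import all_boot all_order all_algebra.
Set Implicit Arguments. Unset Strict Implicit. Unset Printing Implicit Defensive.

(* V : vertices, X : crossings, E : edges (multiset; parallel edges allowed),
   D : darts (half edge-segments) of the planarization.
   alpha : the other half of the same edge-segment,
   sigma : rotation (cyclic order of darts) around a node,
   node  : the node (vertex or crossing) a dart emanates from,
   epath e : the forward darts of the edge-segments of e, in order from
             esrc e to etgt e. *)
Record drawing := Drawing {
  V : finType; X : finType; E : finType; D : finType;
  alpha : D -> D;
  sigma : D -> D;
  node : D -> V + X;
  epath : E -> seq D;
  esrc : E -> V;
  etgt : E -> V }.

Section Defs.
Variable G : drawing.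
Local Notation D := (@D G).
Local Notation alpha := (@alpha G).
Local Notation sigma := (@sigma G).
Local Notation node := (@node G).

Definition is_vnode (n : V G + X G) : bool := if n is inl _ then true else false.
Definition is_xnode (n : V G + X G) : bool := if n is inr _ then true else false.

(* face permutation of the map: cells are the orbits of phi *)
Definition phi (d : D) : D := sigma (alpha d).

(* one step along an edge: from segment d to the next segment through a crossing *)
Definition estep (d d' : D) : bool :=
  is_xnode (node (alpha d)) && (d' == sigma (sigma (alpha d))).

Definition edge_ok (e : E G) : bool :=
  match epath e with
  | [::] => false
  | d0 :: s => [&& node d0 == inl (esrc e),
                   node (alpha (last d0 s)) == inl (etgt e),
                   esrc e != etgt e & path estep d0 s]
  end.

Definition edarts (e : E G) : seq D := epath e ++ map alpha (epath e).

Definition endpoints (e : E G) : seq (V G) := [:: esrc e; etgt e].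

Definition nadj : rel (V G + X G) :=
  fun n n' => [exists d, (node d == n) && (node (alpha d) == n')].

Definition isolated (n : V G + X G) : bool := [forall d, node d != n].

Definition face_root (d : D) : bool := froot phi d == d.
Definition nfaces : nat := #|[pred d | face_root d]|.

Definition drawing_ok : Prop :=
  (forall d, alpha (alpha d) = d /\ alpha d <> d) /\
      injective sigma /\
      (forall d, node (sigma d) = node d) /\
      (forall d d', node d = node d' -> fconnect sigma d d') /\
      (forall x : X G, #|[pred d | node d == inr x]| = 4) /\
      (forall e : E G, edge_ok e) /\
      (forall d, \sum_(e : E G) count_mem d (edarts e) = 1) /\
      (forall d e e', is_xnode (node d) -> d \in edarts e ->
          sigma d \in edarts e' ->
          e != e' /\ [seq v <- endpoints e | v \in endpoints e'] = [::]) /\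
      (* Euler's formula, component by component: genus 0 *)
      #|V G| + #|X G| + nfaces + #|[pred n | isolated n]|
        = #|D| %/ 2 + 2 * n_comp nadj predT.

Definition connected_drawing : Prop := forall n n', connect nadj n n'.

Definition three_plane : Prop := forall e : E G, size (epath e) <= 4.

Definition in_cell (f d : D) : bool := fconnect phi f d.
(* ||c|| = edge-segment incidences + vertex incidences along the boundary walk *)
Definition csize (f : D) : nat :=
  #|[pred d | in_cell f d]| + #|[pred d | in_cell f d && is_vnode (node d)]|.

Definition nvx (f : D) := #|[pred d | in_cell f d && is_vnode (node d)]|.
Definition nxx (f : D) := #|[pred d | in_cell f d && is_xnode (node d)]|.
Definition ninner (f : D) :=
  #|[pred d | in_cell f d && is_xnode (node d) && is_xnode (node (alpha d))]|.
Definition nouter (f : D) :=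
  #|[pred d | in_cell f d && ~~ (is_xnode (node d) && is_xnode (node (alpha d)))]|.

Definition typeA3 (f : D) : bool :=
  [&& csize f == 3, nxx f == 3, ninner f == 3, nvx f == 0 & nouter f == 0].
Definition typeA4 (f : D) : bool :=
  [&& csize f == 4, nxx f == 4, ninner f == 4, nvx f == 0 & nouter f == 0].
Definition typeB4 (f : D) : bool :=
  [&& csize f == 4, nvx f == 1, nxx f == 2, nouter f == 2 & ninner f == 1].

Definition NA3 : nat := #|[pred f | face_root f && typeA3 f]|.
Definition NA4 : nat := #|[pred f | face_root f && typeA4 f]|.
Definition NB4 : nat := #|[pred f | face_root f && typeB4 f]|.
Definition Ccard (a : nat) : nat := #|[pred f | face_root f && (csize f == a)]|.

(* sum_{a >= 6} a |C_a|, grouped by cells *)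
Definition big_cells_sum : nat :=
  \sum_(f : D | face_root f && (6 <= csize f)) csize f.

Definition uncrossed (e : E G) : bool := size (epath e) == 1.

Definition filled : Prop :=
  forall (f : D) (u v : V G), face_root f -> u != v ->
    [exists d, in_cell f d && (node d == inl u)] ->
    [exists d, in_cell f d && (node d == inl v)] ->
    exists (e : E G) (d : D), [/\ uncrossed e, d \in edarts e, in_cell f d &
       ((node d == inl u) && (node (alpha d) == inl v)) ||
       ((node d == inl v) && (node (alpha d) == inl u))].

Definition enodes (e : E G) : seq (V G + X G) :=
  match epath e with
  | [::] => [::]
  | d0 :: _ => node d0 :: [seq node (alpha d) | d <- epath e]
  end.
(* the part of edge e between its i-th and j-th node (0 = esrc e) *)
Definition part_darts (e : E G) (i j : nat) : seq D := take (j - i) (drop i (epath e)).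
Definition part_nodes (e : E G) (i j : nat) : seq (V G + X G) :=
  take (j - i).+1 (drop i (enodes e)).

Definition nonhomotopic : Prop :=
  forall (e e' : E G) (i j i' j' : nat),
    e != e' -> i < j -> i' < j' ->
    j <= size (epath e) -> j' <= size (epath e') ->
    let p := onth (enodes e) i in let q := onth (enodes e) j in
    let p' := onth (enodes e') i' in let q' := onth (enodes e') j' in
    ((p == p') && (q == q')) || ((p == q') && (q == p')) ->
    (forall n, n \in part_nodes e i j -> n \in part_nodes e' i' j' ->
       (Some n == p) || (Some n == q)) ->
    (* the two parts bound a closed curve C; both sides of C (regions of the
       sphere minus C) must contain a vertex or crossing in their interior *)
    let C := part_darts e i j ++ map alpha (part_darts e i j) ++
             part_darts e' i' j' ++ map alpha (part_darts e' i' j') in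
    let Cn := part_nodes e i j ++ part_nodes e' i' j' in
    let r : rel D := fun d d' => (d' == phi d) || ((d' == alpha d) && (d \notin C)) in
    let side_nonempty (d : D) :=
      [exists d', connect r d d' && (node d' \notin Cn)] in
    forall d, d \in part_darts e i j -> side_nonempty d && side_nonempty (alpha d).

Definition three_saturated : Prop :=
  drawing_ok /\ three_plane /\ nonhomotopic /\ connected_drawing /\ filled /\
  3 <= #|V G|.

End Defs.

(* Main.v *)
Require Import Defs.
From mathcomp Require Import all_boot all_order all_algebra zify lra.
Set Implicit Arguments. Unset Strict Implicit. Unset Printing Implicit Defensive.

Lemma connect_inv (T : finType) (r : rel T) (P : pred T) x y :
  P x -> (forall a b, P a -> r a b -> P b) -> connect r x y -> P y.
Proof.
move=> Px Hc /connectP [p pth ->]; elim: p x Px pth => //= z p IH x Px /andP [rxz pth].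
exact: (IH z (Hc _ _ Px rxz) pth).
Qed.

Lemma path_pred (T : eqType) (r : rel T) x s y :
  path r x s -> y \in s -> exists z, r z y.
Proof.
elim: s x => //= z s IH x /andP [rxz pth]; rewrite inE => /orP [/eqP -> | ys].
  by exists x.
exact: (IH z pth ys).
Qed.

Lemma path_succ (T : eqType) (r : rel T) x s y :
  path r x s -> y \in x :: s -> y != last x s -> exists z, r y z.
Proof.
elim: s x => [|z s IH] x /=; first by rewrite inE => _ /eqP -> /eqP.
move=> /andP [rxz pth]; rewrite inE => /orP [/eqP -> | ys] nl.
  by exists z.
exact: (IH z pth ys nl).
Qed.

Lemma take2_drop (T : eqType) (s : seq T) i n :
  n \in take 2 (drop i s) -> onth s i = Some n \/ onth s i.+1 = Some n.
Proof.
elim: s i => [|a s IH] [|i] //=.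
  case: s {IH} => [|b s] /=; rewrite ?take0 !inE ?orbF; first by move/eqP->; left.
  by case/orP => /eqP ->; [left|right].
exact: IH.
Qed.

Lemma take2_drop_in (T : eqType) (s : seq T) i n :
  onth s i = Some n \/ onth s i.+1 = Some n -> n \in take 2 (drop i s).
Proof.
elim: s i => [|a s IH] [|i] /=; first (by case); first (by case).
  case: s {IH} => [|b s] /=; rewrite ?take0 !inE; first by case => // [[->]].
  by case=> [[->]|[->]]; rewrite eqxx ?orbT.
exact: IH.
Qed.

Section Sx.
Variable G : drawing.
Hypothesis aa : forall d : D G, alpha (alpha d) = d.
Hypothesis nsig : forall d : D G, node (sigma d) = node d.
Hypothesis eok : forall e : E G, edge_ok e.
Hypothesis ecount : forall d : D G, \sum_(e : E G) count_mem d (edarts e) = 1.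

Lemma edge_okP (e : E G) : exists d0 s, [/\ epath e = d0 :: s, node d0 = inl (esrc e),
   node (alpha (last d0 s)) = inl (etgt e), esrc e != etgt e & path (@estep G) d0 s].
Proof.
have := eok e; rewrite /edge_ok; case: (epath e) => // d0 s /and4P [/eqP h1 /eqP h2 h3 h4].
by exists d0, s.
Qed.

Lemma in_edarts_uniq (d : D G) (e e' : E G) : d \in edarts e -> d \in edarts e' -> e = e'.
Proof.
move=> h h'; apply/eqP; apply/negPn/negP => ne.
have := ecount d; rewrite (bigD1 e) //= (bigD1 e') /=; last by rewrite eq_sym.
have c1 : 0 < count_mem d (edarts e) by rewrite -has_count has_pred1.
have c2 : 0 < count_mem d (edarts e') by rewrite -has_count has_pred1.
move=> H; move: H c1 c2; set a := count_mem d (edarts e); set b := count_mem d (edarts e'); set c := bigop _ _ _; lia.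
Qed.

Lemma edge_of (d : D G) : exists e, d \in edarts e.
Proof.
have := ecount d; case: (pickP (fun e => d \in edarts e)) => [e he|h]; first by exists e.
by rewrite big1 // => e _; apply/count_memPn; rewrite h.
Qed.

Lemma edarts_alpha (d : D G) (e : E G) : (alpha d \in edarts e) = (d \in edarts e).
Proof.
have H : forall d, d \in edarts e -> alpha d \in edarts e.
  move=> x; rewrite /edarts !mem_cat => /orP [h|/mapP [y hy ->]].
    by rewrite (map_f (@alpha G)) ?orbT.
  by rewrite aa hy.
apply/idP/idP => [/H|/H //]; by rewrite aa.
Qed.

Lemma fwd (d : D G) (e : E G) : d \in edarts e -> d \in epath e \/ alpha d \in epath e.
Proof.
rewrite /edarts mem_cat => /orP [h|/mapP [y hy ->]]; first by left.
by right; rewrite aa.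
Qed.

Lemma estep_node (d d' : D G) : estep d d' -> is_xnode (node (alpha d)) /\ node d' = node (alpha d).
Proof. by case/andP => h /eqP ->; rewrite !nsig. Qed.

Lemma fwd_vnode (y : D G) (e : E G) : y \in epath e -> is_vnode (node y) ->
  exists s, epath e = y :: s /\ node y = inl (esrc e).
Proof.
have [d0 [s [ep h1 h2 h3 h4]]] := edge_okP e; rewrite ep inE => /orP [/eqP ->|ys] hv.
  by exists s.
have [z /estep_node [hx hn]] := path_pred h4 ys.
by move: hv; rewrite hn; case: (node (alpha z)) hx.
Qed.

Lemma fwd_avnode (y : D G) (e : E G) : y \in epath e -> is_vnode (node (alpha y)) ->
  exists d0 s, epath e = d0 :: s /\ y = last d0 s /\ node (alpha y) = inl (etgt e).
Proof.
have [d0 [s [ep h1 h2 h3 h4]]] := edge_okP e; rewrite ep => ys hv.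
case: (altP (y =P last d0 s)) => [->|ne]; first by exists d0, s.
have [z /estep_node [hx hn]] := path_succ h4 ys ne.
by move: hv; case: (node (alpha y)) hx.
Qed.

Lemma vnode_end (d : D G) (e : E G) v : d \in edarts e -> node d = inl v -> v = esrc e \/ v = etgt e.
Proof.
case/fwd => h hn.
  have := fwd_vnode h; rewrite hn => /(_ isT) [s [_]].
  by case=> ->; left.
have := fwd_avnode h; rewrite aa hn => /(_ isT) [d0 [s [_ [_]]]].
by case=> ->; right.
Qed.

Lemma vv_neq (y : D G) (e : E G) : y \in epath e -> is_vnode (node y) -> is_vnode (node (alpha y)) ->
  node y <> node (alpha y).
Proof.
move=> h hv hav.
have [s [_ ->]] := fwd_vnode h hv.
have [d0 [s' [_ [_ ->]]]] := fwd_avnode h hav.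
have [d1 [s1 [_ _ _ ne _]]] := edge_okP e.
by case=> eq; rewrite eq eqxx in ne.
Qed.

End Sx.

Lemma onth_map_nth (T U : Type) (f : T -> U) (t : seq T) x0 i :
  i < size t -> onth (map f t) i = Some (f (nth x0 t i)).
Proof. by elim: t i => [|a t IH] [|i] //= hi; apply: IH. Qed.

Section T.
Variable G : drawing.
Hypothesis aa : forall d : D G, alpha (alpha d) = d.
Hypothesis nsig : forall d : D G, node (sigma d) = node d.
Hypothesis eok : forall e : E G, edge_ok e.

Lemma enodes_nth (e : E G) i (x0 : D G) : i < size (epath e) ->
  onth (enodes e) i = Some (node (nth x0 (epath e) i)) /\
  onth (enodes e) i.+1 = Some (node (alpha (nth x0 (epath e) i))).
Proof.
have [d0 [s [ep h1 h2 h3 h4]]] := edge_okP eok e.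
rewrite /enodes ep => hi; split; last first.
  exact: (onth_map_nth (fun d => node (alpha d)) x0 hi).
case: i hi => [|k] hk //=.
have hk' : k < size (d0 :: s) by rewrite /=; move: hk => /=; lia.
have -> := (onth_map_nth (fun d => node (alpha d)) x0 hk').
have := (pathP x0 h4 k); rewrite /= => /(_ hk) /(estep_node nsig) [_ ->].
done.
Qed.
End T.

Lemma take2_onth (T : Type) (s : seq T) i a b :
  onth s i = Some a -> onth s i.+1 = Some b -> take 2 (drop i s) = [:: a; b].
Proof.
elim: s i => [|x s IH] [|i] //=; last exact: IH.
by case: s {IH} => [|y s] //= [->] [->]; rewrite take0.
Qed.

Lemma take1_nth (T : Type) (s : seq T) i x0 :
  i < size s -> take 1 (drop i s) = [:: nth x0 s i].
Proof. by move=> hi; rewrite (drop_nth x0 hi) /= take0. Qed.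

Lemma inter2 (T : eqType) (a b n : T) : n \in [:: a; b] -> (Some n == Some a) || (Some n == Some b).
Proof. by rewrite !inE => /orP [] /eqP ->; rewrite eqxx ?orbT. Qed.

Section U.
Variable G : drawing.
Hypothesis aa : forall d : D G, alpha (alpha d) = d.
Hypothesis nsig : forall d : D G, node (sigma d) = node d.
Hypothesis eok : forall e : E G, edge_ok e.

Lemma fwd_pick (d : D G) (e : E G) : d \in edarts e ->
  exists f i, [/\ i < size (epath e), nth d (epath e) i = f &
     (f == d) || (f == alpha d)].
Proof.
case/(fwd aa) => h.
  by exists d, (index d (epath e)); rewrite index_mem nth_index // eqxx.
exists (alpha d), (index (alpha d) (epath e)).
by rewrite index_mem nth_index // eqxx orbT.
Qed.

Lemma no_lens (NH : nonhomotopic G) (d d' : D G) (e1 e2 : E G) :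
  e1 != e2 -> d \in edarts e1 -> d' \in edarts e2 -> phi d = d' -> phi d' = d -> False.
Proof.
move=> ne h1 h2 p1 p2.
have n1 : node d' = node (alpha d) by rewrite -p1 /phi nsig.
have n2 : node (alpha d') = node d by rewrite -{1}p2 /phi nsig.
have [f1 [i [hi nf1 c1]]] := fwd_pick h1.
have [f2 [j [hj nf2 c2]]] := fwd_pick h2.
have [o1 o1'] := enodes_nth nsig eok d hi.
have [o2 o2'] := enodes_nth nsig eok d' hj.
rewrite nf1 in o1 o1'; rewrite nf2 in o2 o2'.
have H := NH e1 e2 i i.+1 j j.+1 ne (ltnSn i) (ltnSn j) hi hj.
move: H; rewrite /part_darts /part_nodes !subSnn (take2_onth o1 o1') (take2_onth o2 o2').
rewrite (take1_nth d hi) (take1_nth d' hj) nf1 nf2 o1 o1' o2 o2' /=.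
have key : forall (C : seq (D G)) (Cn : seq (V G + X G)),
  d \in C -> d' \in C -> node d \in Cn -> node d' \in Cn ->
  ~~ [exists y, connect (fun a b => (b == phi a) || ((b == alpha a) && (a \notin C))) d y
                && (node y \notin Cn)].
  move=> C Cn dC d'C nd nd'; apply/existsP => [[y /andP [cy ny]]].
  have : y \in [:: d; d'].
    apply: (connect_inv (P := mem [:: d; d'])) cy; first exact: mem_head.
    move=> a b; rewrite !inE => /orP [] /eqP -> /orP [/eqP ->|/andP []].
    - by rewrite p1 eqxx orbT.
    - by rewrite dC.
    - by rewrite p2 eqxx.
    - by rewrite d'C.
  by rewrite !inE => /orP [] /eqP E; rewrite E ?nd ?nd' in ny.
move=> H.
have := H _ _ f1 (mem_head _ _).
case/orP: c1 => /eqP E1; case/orP: c2 => /eqP E2; rewrite {}E1 {}E2 ?aa ?n1 ?n2.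
all: rewrite !eqxx ?orbT ?andbT /= => /(_ isT (fun n hn _ => inter2 hn)) /andP [s1 s2].
all: first [ move: s1; apply/negP; apply: key; by rewrite !inE ?n1 ?eqxx ?orbT
           | move: s2; apply/negP; apply: key; by rewrite !inE ?n1 ?eqxx ?orbT ].
Qed.
End U.

Lemma third (T : finType) (u v : T) : 3 <= #|T| -> exists w, (w != u) && (w != v).
Proof.
move=> h; suff /existsP [w hw] : [exists w, (w != u) && (w != v)] by exists w.
apply: contraT => /existsPn H.
have : #|T| <= 2.
  apply: leq_trans (card_size [:: u; v]).
  apply: subset_leq_card; apply/subsetP => w _.
  by have := H w; rewrite negb_and !negbK !inE.
by rewrite leqNgt (leq_trans _ h).
Qed.

Lemma fconnect_fix (T : finType) (f : T -> T) z x : f z = z -> fconnect f z x -> x = z.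
Proof. by move=> fz /iter_findex <-; rewrite iter_fix. Qed.

Section Y.
Variable G : drawing.
Hypothesis aa : forall d : D G, alpha (alpha d) = d.
Hypothesis nsig : forall d : D G, node (sigma d) = node d.
Hypothesis nconn : forall d d' : D G, node d = node d' -> fconnect (@sigma G) d d'.
Hypothesis eok : forall e : E G, edge_ok e.
Hypothesis ecount : forall d : D G, \sum_(e : E G) count_mem d (edarts e) = 1.
Hypothesis xcond : forall (d : D G) e e', is_xnode (node d) -> d \in edarts e ->
          sigma d \in edarts e' ->
          e != e' /\ [seq v <- endpoints e | v \in endpoints e'] = [::].
Hypothesis NH : nonhomotopic G.
Hypothesis conn : connected_drawing G.
Hypothesis V3 : 3 <= #|V G|.

Lemma disj_end (e e' : E G) v : [seq v <- endpoints e | v \in endpoints e'] = [::] ->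
  v = esrc e \/ v = etgt e -> v = esrc e' \/ v = etgt e' -> False.
Proof.
move=> H h h'; have : v \in [seq v <- endpoints e | v \in endpoints e'].
  rewrite mem_filter !inE; apply/andP; split.
    by case: h' => ->; rewrite eqxx ?orbT.
  by case: h => ->; rewrite eqxx ?orbT.
by rewrite H.
Qed.

Lemma no_small (d : D G) : phi (phi d) != d.
Proof.
apply/negP => /eqP p2; set d' := phi d in p2; have p1 : phi d = d' by [].
have n1 : node d' = node (alpha d) by rewrite -p1 /phi nsig.
have n2 : node (alpha d') = node d by rewrite -{1}p2 /phi nsig.
have [e1 h1] := edge_of ecount d; have [e2 h2] := edge_of ecount d'.
have ha1 : alpha d \in edarts e1 by rewrite edarts_alpha.
have ha2 : alpha d' \in edarts e2 by rewrite edarts_alpha.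
case Ha: (node (alpha d)) => [u|x].
  case Hd: (node d) => [v|y]; last first.
    have hx : is_xnode (node (alpha d')) by rewrite n2 Hd.
    have hs : sigma (alpha d') \in edarts e1 by rewrite -/(phi d') p2.
    have [ne dj] := xcond hx ha2 hs.
    apply: (disj_end dj (v := u)).
      by apply: (vnode_end aa nsig eok h2); rewrite n1.
    exact: (vnode_end aa nsig eok ha1 Ha).
  case: (altP (e1 =P e2)) => [E12|ne]; last exact: (no_lens aa nsig eok NH ne h1 h2 p1 p2).
  subst e2.
  have hvy : forall y, (y = d \/ y = alpha d) -> is_vnode (node y) && is_vnode (node (alpha y)).
    by move=> y [] ->; rewrite ?aa Hd Ha.
  have [y [hy yd]] : exists y, y \in epath e1 /\ (y = d \/ y = alpha d).
    by case: (fwd aa h1) => h; [exists d | exists (alpha d)]; split => //; [left|right].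
  have [y' [hy' yd']] : exists y, y \in epath e1 /\ (y = d' \/ y = alpha d').
    by case: (fwd aa h2) => h; [exists d' | exists (alpha d')]; split => //; [left|right].
  have /andP [vy vay] := hvy y yd.
  have [vy' vay'] : is_vnode (node y') /\ is_vnode (node (alpha y')).
    by case: yd' => ->; rewrite ?aa ?n1 ?n2 Hd Ha.
  have [s [es _]] := fwd_vnode nsig eok hy vy.
  have [s' [es' _]] := fwd_vnode nsig eok hy' vy'.
  have yy : y' = y by move: es'; rewrite es => [[]].
  have nyy := vv_neq nsig eok hy vy vay.
  have dd : d' = d \/ d' = alpha d.
    case: yd' => Ey'; case: yd => Ey; rewrite -yy Ey' in Ey.
    - by left.
    - by right.
    - by right; rewrite -Ey aa.
    - by left; rewrite -(aa d') Ey aa.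
  case: dd => Edd.
    by move: nyy; case: yd => ->; rewrite ?aa => H; apply: H; rewrite -n1 Edd.
  have sa : sigma (alpha d) = alpha d by move: p1; rewrite Edd.
  have sd : sigma d = d by move: p2; rewrite Edd /phi aa.
  have [w /andP [wv wu]] := third v u V3.
  have := conn (node d) (inl w).
  move/(connect_inv (P := fun n => (n == node d) || (n == node (alpha d)))).
  rewrite eqxx Hd Ha /= => /(_ isT).
  move=> H.
  have step : forall a b : V G + X G,
      (a == inl v) || (a == inl u) -> nadj a b -> (b == inl v) || (b == inl u).
    move=> a b /orP [] /eqP -> /existsP [x /andP [/eqP nx /eqP <-]].
      have : x = d by apply: (fconnect_fix sd); apply: nconn; rewrite nx Hd.
      by move=> ->; rewrite Ha eqxx orbT.
    have : x = alpha d by apply: (fconnect_fix sa); apply: nconn; rewrite nx Ha.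
    by move=> ->; rewrite aa Hd eqxx.
  by case/orP: (H step) => /eqP [] E0; [move: wv|move: wu]; rewrite E0 eqxx.
have hx : is_xnode (node (alpha d)) by rewrite Ha.
have [ne dj] := xcond hx ha1 h2.
case Hd: (node d) => [v|y]; last first.
  exact: (no_lens aa nsig eok NH ne h1 h2 p1 p2).
apply: (disj_end dj (v := v)).
  exact: (vnode_end aa nsig eok h1 Hd).
by apply: (vnode_end aa nsig eok ha2); rewrite n2.
Qed.
End Y.

Lemma card_sumb (T : finType) (P : pred T) : #|P| = \sum_(x : T) (P x : nat).
Proof.
rewrite -sum1_card [RHS](bigID P) /= [X in _ + X]big1 ?addn0; last by move=> x /negbTE ->.
by apply: eq_big => // x; rewrite unfold_in => ->.
Qed.

Lemma sum_orbits (T : finType) (f : T -> T) (w : T -> nat) : injective f ->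
  \sum_(x | froot f x == x) \sum_(y | fconnect f x y) w y = \sum_(y : T) w y.
Proof.
move=> fi; have sym : connect_sym (frel f) by move=> x y; apply: fconnect_sym.
rewrite [RHS](partition_big (froot f) (fun x => froot f x == x)) /=; last first.
  by move=> i _; rewrite (root_root sym).
apply: eq_bigr => j /eqP rj; apply: eq_bigl => y.
by rewrite -{2}rj (root_connect sym) sym.
Qed.

Lemma card_in_uniq (T : finType) (s : seq T) (P Q : pred T) : uniq s ->
  (forall x, P x = (x \in s) && Q x) -> #|P| = count Q s.
Proof.
move=> us hP; rewrite -size_filter -(card_uniqP (filter_uniq Q us)).
by apply: eq_card => x; rewrite mem_filter andbC -hP.
Qed.

Section Z.
Variable G : drawing.
Hypothesis aa : forall d : D G, alpha (alpha d) = d.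
Hypothesis sinj : injective (@sigma G).
Hypothesis nsig : forall d : D G, node (sigma d) = node d.
Hypothesis xdeg : forall x : X G, #|[pred d : D G | node d == inr x]| = 4.

Lemma phi_inj : injective (@phi G).
Proof. by move=> x y /sinj; apply: (can_inj aa). Qed.

Lemma csize_sum (f : D G) : csize f = \sum_(d | in_cell f d) (1 + is_vnode (node d)).
Proof.
rewrite /csize !card_sumb -big_split /= [RHS]big_mkcond; apply: eq_bigr => d _ /=.
by case: (in_cell f d); case: (is_vnode _).
Qed.

Lemma sum_csize : \sum_(f : D G | face_root f) csize f =
   #|D G| + #|[pred d : D G | is_vnode (node d)]|.
Proof.
under eq_bigr do rewrite csize_sum.
rewrite (sum_orbits _ phi_inj) big_split /= -card_sumb; congr (_ + _).
by rewrite sum1_card.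
Qed.

Lemma nfaces_sum : nfaces G = \sum_(f : D G | face_root f) 1.
Proof. by rewrite sum1_card. Qed.

Lemma card_D : #|D G| = #|[pred d : D G | is_vnode (node d)]| + #|[pred d : D G | is_xnode (node d)]|.
Proof.
rewrite !card_sumb -big_split /=; apply: eq_bigr => d _.
by case: (node d).
Qed.

Lemma card_Dx : #|[pred d : D G | is_xnode (node d)]| = 4 * #|X G|.
Proof.
have -> : 4 * #|X G| = \sum_(x : X G) #|[pred d : D G | node d == inr x]|.
  by rewrite (eq_bigr (fun _ => 4)) ?sum_nat_const ?card_ord // mulnC.
under eq_bigr do rewrite card_sumb.
rewrite exchange_big card_sumb /=; apply: eq_bigr => d _.
case: (node d) => [v|x] /=.
  by rewrite big1.
rewrite (bigD1 x) //= eqxx big1 // => y ne.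
by case: eqP => // -[] E; rewrite E eqxx in ne.
Qed.
End Z.

Section Z2.
Variable G : drawing.
Hypothesis aa : forall d : D G, alpha (alpha d) = d.
Hypothesis sinj : injective (@sigma G).
Hypothesis nsig : forall d : D G, node (sigma d) = node d.

Lemma card_cell (f : D G) (Q : pred (D G)) :
  #|[pred d | in_cell f d && Q d]| = count Q (orbit (@phi G) f).
Proof.
by apply: card_in_uniq (orbit_uniq _ _) _ => d; rewrite /= /in_cell fconnect_orbit.
Qed.

Lemma card_cell1 (f : D G) : #|[pred d | in_cell f d]| = order (@phi G) f.
Proof.
rewrite -size_orbit -count_predT -(card_cell f predT).
by apply: eq_card => d; rewrite !unfold_in /= andbT.
Qed.

Lemma nodeA (x : D G) : node (alpha x) = node (phi x).
Proof. by rewrite /phi nsig. Qed.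

Lemma xv (n : V G + X G) : is_xnode n = ~~ is_vnode n.
Proof. by case: n. Qed.

Lemma face_ineq (f : D G) : 2 < order (@phi G) f ->
  30 + (if 6 <= csize f then csize f else 0) <=
  6 * csize f + 12 * typeA3 f + 6 * typeA4 f + 6 * typeB4 f.
Proof.
move=> h3.
have cs : csize f = order (@phi G) f + count (fun d => is_vnode (node d)) (orbit (@phi G) f).
  by rewrite /csize card_cell1 card_cell.
have io := iter_order (phi_inj aa sinj) f.
case: (ltnP 4 (order (@phi G) f)) => h5.
  have c5 : 5 <= csize f by rewrite cs; lia.
  by case: (leqP 6 (csize f)) => h; lia.
rewrite /typeA3 /typeA4 /typeB4 /nvx /nxx /ninner /nouter.
rewrite (card_cell f (fun d => is_vnode (node d))) (card_cell f (fun d => is_xnode (node d))).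
have ni : #|[pred d | in_cell f d && is_xnode (node d) && is_xnode (node (alpha d))]| =
   count (fun d => is_xnode (node d) && is_xnode (node (alpha d))) (orbit (@phi G) f).
  rewrite -card_cell; apply: eq_card => d; by rewrite !unfold_in /= andbA.
rewrite ni card_cell cs /orbit.
case E: (order (@phi G) f) h3 h5 io => [|[|[|[|[|k]]]]] //= _ _ io.
- rewrite !nodeA io !xv.
  by case: (is_vnode (node f)); case: (is_vnode (node (phi f))); case: (is_vnode (node (phi (phi f)))).
- rewrite !nodeA io !xv.
  by case: (is_vnode (node f)); case: (is_vnode (node (phi f))); case: (is_vnode (node (phi (phi f))));
     case: (is_vnode (node (phi (phi (phi f))))).
Qed.
End Z2.

Lemma card_andsum (T : finType) (P Q : pred T) :
  #|[pred x | P x && Q x]| = \sum_(x | P x) (Q x : nat).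
Proof.
rewrite card_sumb [RHS]big_mkcond; apply: eq_bigr => x _ /=.
by case: (P x).
Qed.

Section M.
Variable G : drawing.
Hypothesis aa : forall d : D G, alpha (alpha d) = d.
Hypothesis sinj : injective (@sigma G).
Hypothesis nsig : forall d : D G, node (sigma d) = node d.
Hypothesis eok : forall e : E G, edge_ok e.
Hypothesis ecount : forall d : D G, \sum_(e : E G) count_mem d (edarts e) = 1.
Hypothesis conn : connected_drawing G.
Hypothesis V3 : 3 <= #|V G|.

Lemma Dv_ge : 2 * #|E G| <= #|[pred d : D G | is_vnode (node d)]|.
Proof.
case: (pickP (@predT (E G))) => [e0 _|E0]; last first.
  by rewrite eq_card0 // => e; rewrite unfold_in /= E0.
have [x0 _] := edge_okP eok e0.
pose g (z : E G + E G) : D G :=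
  match z with inl e => head x0 (epath e) | inr e => alpha (last x0 (epath e)) end.
have gn : forall z, node (g z) = inl (match z with inl e => esrc e | inr e => etgt e end).
  case=> e /=; have [d0 [s [-> h1 h2 _ _]]] := edge_okP eok e; by [].
have gm : forall z, g z \in edarts (match z with inl e => e | inr e => e end).
  case=> e /=; have [d0 [s [ep _ _ _ _]]] := edge_okP eok e; rewrite /edarts ep.
    by rewrite /= inE eqxx.
  by rewrite mem_cat; apply/orP; right; exact: (map_f (@alpha G) (mem_last d0 s)).
have ginj : injective g.
  move=> z1 z2 eq; have := gm z2; rewrite -eq => /(in_edarts_uniq ecount (gm z1)).
  have := gn z1; rewrite eq gn.
  case: z1 {eq} => e1; case: z2 => e2 /= [] ne E12; subst e1 => //; exfalso;
    have [d0 [s [_ _ _ /eqP H _]]] := edge_okP eok e2; by first [exact: H ne | exact: H (esym ne)].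
rewrite mul2n -addnn -card_sum -cardsT -(card_imset _ ginj); apply: subset_leq_card; apply/subsetP => _ /imsetP [z _ ->].
by rewrite unfold_in /= gn.
Qed.

Lemma iso0 : #|[pred n : V G + X G | isolated n]| = 0.
Proof.
have /card_gt0P [v0 _] : 0 < #|V G| by apply: leq_trans V3.
apply: eq_card0 => n; rewrite unfold_in /=; apply/negbTE.
have [w hw] : exists w : V G, inl w != n.
  case: n => [v|x]; last by exists v0.
  by have [w /andP [h _]] := third v v V3; exists w.
have := conn n (inl w); case/connectP => -[|z p] /= pth lst.
  by rewrite lst eqxx in hw.
case/andP: pth => /existsP [d /andP [/eqP nd _]] _.
by rewrite /isolated negb_forall; apply/existsP; exists d; rewrite negbK nd.
Qed.

Lemma ncomp1 : 0 < n_comp (@nadj G) predT.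
Proof.
have /card_gt0P [v0 _] : 0 < #|V G| by apply: leq_trans V3.
have sym : connect_sym (@nadj G) by move=> x y; rewrite !conn.
apply/card_gt0P; exists (fingraph.root (@nadj G) (inl v0)).
by rewrite !inE /= (roots_root sym).
Qed.

End M.

Lemma order3 (G : drawing) (aa : forall d : D G, alpha (alpha d) = d)
  (sinj : injective (@sigma G)) (ns : forall d : D G, phi (phi d) != d) (f : D G) :
  2 < order (@phi G) f.
Proof.
have hi := iter_order (phi_inj aa sinj) f; have n := ns f.
have := order_gt0 (@phi G) f.
case E: (order (@phi G) f) hi => [|[|[|k]]] //= hi _.
  by rewrite hi hi eqxx in n.
by rewrite hi eqxx in n.
Qed.

Import Order.TTheory GRing.Theory Num.Theory.
Local Open Scope ring_scope.

Theorem mainTheorem8 (G : drawing) :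
  three_saturated G ->
  (#|X G|%:R : rat) <=
    5 * (#|V G|%:R) + 2 * (NA3 G)%:R + (NA4 G)%:R + (NB4 G)%:R
    - (1 / 6) * (big_cells_sum G)%:R - #|E G|%:R.
Proof.
move=> [[H1 [sinj [nsig [nconn [xdeg [eok [ecount [xcond euler]]]]]]]] [_ [NH [conn [_ V3]]]]].
have aa : forall d : D G, alpha (alpha d) = d by move=> d; case: (H1 d).
have ns := no_small aa nsig nconn eok ecount xcond NH conn V3.
have key : (6 * #|X G| + big_cells_sum G + 6 * #|E G| <=
            30 * #|V G| + 12 * NA3 G + 6 * NA4 G + 6 * NB4 G)%N.
  have hS := sum_csize aa sinj.
  have hD := card_D G; have hX := card_Dx xdeg.
  have hE := Dv_ge eok ecount.
  have hiso := iso0 conn V3; have hc := ncomp1 conn V3.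
  have hsum : (30 * nfaces G + big_cells_sum G <=
     6 * \sum_(f : D G | face_root f) csize f + 12 * NA3 G + 6 * NA4 G + 6 * NB4 G)%N.
    rewrite nfaces_sum /big_cells_sum /NA3 /NA4 /NB4 !card_andsum big_mkcondr.
    rewrite !big_distrr -!big_split /=; apply: leq_sum => f _.
    rewrite muln1; exact: (@face_ineq G aa sinj nsig f (order3 aa sinj ns f)).
  move: euler hsum; rewrite hS hiso => eu hs.
  lia.
move: key; rewrite -(ler_nat rat) !natrD => k.
lra.
Qed.
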